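(* Let $S$ be a group, $A$ a left $S$-act and $I$ a set with $|I|\ge 2$. Then $A^{(\ast)I}$ is geometrically equivalent to $A^{(\ast)2}=A_1\amalg A_2$, where $A_1=A=A_2$.
   Context: A left $S$-act is a nonempty set with an action $S\times A\to A$ satisfying $1a=a$, $(st)a=s(ta)$; homomorphisms preserve the action; $\amalg$ denotes coproduct (disjoint union), and $A^{(\ast)I}=\coprod_{i\in I}A_i$ with each $A_i=A$. For a nonempty finite set $X$, $F_X=\coprod_{x\in X}S_x$ is the free $S$-act on $X$. For an $S$-act $G$ and a relation $T\subseteq F_X\times F_X$, $T'_G=\{\mu:F_X\to G \text{ homomorphism}: T\subseteq\ker\mu\}$ and $T''_G=\bigcap_{\mu\in T'_G}\ker\mu$ (empty intersection $=F_X\times F_X$). $S$-acts $G_1,G_2$ are geometrically equivalent iff $T''_{G_1}=T''_{G_2}$ for all nonempty finite $X$ and all $T\subseteq F_X\times F_X$. *)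

(* Defs.v *)
From mathcomp Require Import all_boot.
Set Implicit Arguments.
Unset Strict Implicit.
Unset Printing Implicit Defensive.

Record group := Group {
  gcarrier :> Type;
  gmul : gcarrier -> gcarrier -> gcarrier;
  gone : gcarrier;
  ginv : gcarrier -> gcarrier;
  gmulA : forall x y z, gmul x (gmul y z) = gmul (gmul x y) z;
  gmul1g : forall x, gmul gone x = x;
  gmulg1 : forall x, gmul x gone = x;
  gmulVg : forall x, gmul (ginv x) x = gone;
  gmulgV : forall x, gmul x (ginv x) = gone
}.

(** A left S-act: a set with an action satisfying 1a = a and (st)a = s(ta).
    Nonemptiness is not a field; it is imposed as a hypothesis where needed. *)
Record act (S : group) := Act {
  acarrier :> Type;
  aop : S -> acarrier -> acarrier;
  aop1 : forall a, aop (gone S) a = a;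
  aopM : forall s t a, aop (gmul s t) a = aop s (aop t a)
}.

Arguments aop {S} a s x : rename.

Definition is_hom (S : group) (G H : act S) (f : G -> H) : Prop :=
  forall (s : S) (x : G), f (aop G s x) = aop H s (f x).

(** Coproduct (disjoint union) A^{( * )I} = coprod_{i in I} A_i with A_i = A,
    realised as I * A with action s(i,a) = (i, s a). *)
Definition coprod_act (S : group) (I : Type) (A : act S) : act S.
Proof.
refine (@Act S (I * A) (fun s p => (p.1, aop A s p.2)) _ _).
- by move=> [i a] /=; rewrite aop1.
- by move=> s t [i a] /=; rewrite aopM.
Defined.

(** The free S-act F_X = coprod_{x in X} S_x, realised as X * S with
    action s(x,t) = (x, s t). *)
Definition free_act (S : group) (X : Type) : act S.
Proof.
refine (@Act S (X * S) (fun s p => (p.1, gmul s p.2)) _ _).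
- by move=> [x t] /=; rewrite gmul1g.
- by move=> s t [x u] /=; rewrite gmulA.
Defined.

(** T''_G : intersection of the kernels of all homomorphisms mu : F_X -> G
    whose kernel contains T (the empty intersection being F_X x F_X). *)
Definition closure2 (S : group) (X : Type) (G : act S)
    (T : free_act S X -> free_act S X -> Prop) (u v : free_act S X) : Prop :=
  forall mu : free_act S X -> G,
    is_hom mu -> (forall p q, T p q -> mu p = mu q) -> mu u = mu v.

Definition geom_equiv (S : group) (G1 G2 : act S) : Prop :=
  forall (X : finType), 0 < #|X| ->
  forall (T : free_act S X -> free_act S X -> Prop) (u v : free_act S X),
    closure2 G1 T u v <-> closure2 G2 T u v.

(* Main.v *)
Require Import Defs.
From mathcomp Require Import all_boot.
From Stdlib Require Import ClassicalEpsilon.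

Theorem proposition3p18 (S : group) (A : act S) (I : Type) :
  inhabited A ->
  (exists i j : I, i <> j) ->
  geom_equiv (coprod_act I A) (coprod_act bool A).
Proof.
move=> _ [i [j hij]] X _ T u v; split.
- move=> H mu hmu hT.
  pose e (b : bool) : I := if b then i else j.
  have einj : forall b c, e b = e c -> b = c.
    by move=> [] [] //= h; exfalso; apply: hij; rewrite h.
  pose mu' := fun p => (e (mu p).1, (mu p).2) : coprod_act I A.
  have hmu' : is_hom mu'.
    move=> s x; rewrite /mu' hmu //.
  have := H mu' hmu' (fun p q hpq => ltac:(rewrite /mu' (hT p q hpq); reflexivity)).
  rewrite /mu'; case: (mu u) => a b; case: (mu v) => c d /= [] /einj -> ->.
  by [].
- move=> H mu hmu hT.
  pose f (p : free_act S X) : bool :=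
    if excluded_middle_informative ((mu p).1 = (mu u).1) then true else false.
  pose nu := fun p => (f p, (mu p).2) : coprod_act bool A.
  have hnu : is_hom nu.
    move=> s x; rewrite /nu /f hmu //.
  have := H nu hnu (fun p q hpq => ltac:(rewrite /nu /f (hT p q hpq); reflexivity)).
  rewrite /nu /f.
  move=> h.
  have e2 : (mu u).2 = (mu v).2 by move: h => [_ ->].
  have e1 : (mu v).1 = (mu u).1.
    move: h => [] hb _.
    move: hb.
    destruct (excluded_middle_informative ((mu u).1 = (mu u).1)) as [e0|n]; last by case: n.
    by destruct (excluded_middle_informative ((mu v).1 = (mu u).1)).
  by move: e1 e2; case: (mu u) => a b; case: (mu v) => c d /= -> ->.
Qed.
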